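(* Let $b\ge 2$ and $n\ge 1$ be integers. Then $$\mathrm{Ap}(T_b(n),s_0)=\Big\{\sum_{j=1}^{n+1} t_j s_j \;:\; (t_1,\dots,t_{n+1})\in R_b(n)\Big\}.$$
   Context: For integers $b\ge 2$, $n\ge 0$, $i\ge0$ put $s_i=(b+1)b^{n+i}-1$ and $T_b(n)=\langle\{s_i:i\in\mathbb{N}\}\rangle$ (the submonoid of $(\mathbb{N},+)$ generated by the $s_i$; it is a numerical semigroup). For a numerical semigroup $S$ and $x\in S\setminus\{0\}$, the Apéry set is $\mathrm{Ap}(S,x)=\{s\in S : s-x\notin S\}$. $R_b(n)$ is the set of tuples $(t_1,\dots,t_{n+1})\in\{0,1,\dots,b\}^{n+1}$ satisfying: (i) $t_{n+1}\le b-1$; (ii) if $t_j=b$ for some $j$, then $t_i=0$ for all $i<j$; (iii) if $t_{n+1}=b-1$, then $t_n\le b-1$, and if moreover $t_n=b-1$, then $t_1=\dots=t_{n-1}=0$. *)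

(* Defs.v *)
From mathcomp Require Import all_boot.

Definition sgen (b n i : nat) : nat := (b.+1) * b ^ (n + i) - 1.

Definition inT (b n x : nat) : Prop :=
  exists c : seq nat, x = \sum_(i < size c) nth 0 c i * sgen b n i.

Definition inApery (S : nat -> Prop) (m x : nat) : Prop :=
  S x /\ ~ (m <= x /\ S (x - m)).

(* R_b(n): tuples (t_1,...,t_{n+1}) in {0..b}^{n+1}, represented as
   t : nat -> nat where only indices 1..n+1 matter. *)
Definition inR (b n : nat) (t : nat -> nat) : Prop :=
  (forall j, 1 <= j <= n.+1 -> t j <= b) /\
  t n.+1 <= b - 1 /\
  (forall j, 1 <= j <= n.+1 -> t j = b -> forall i, 1 <= i < j -> t i = 0) /\
  (t n.+1 = b - 1 ->
     t n <= b - 1 /\ (t n = b - 1 -> forall i, 1 <= i <= n.-1 -> t i = 0)).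

(* Main.v *)
Require Import Defs.
From mathcomp Require Import all_boot zify.

Definition W (L : nat) (g f : nat -> nat) := \sum_(0 <= i < L) g i * f i.
Definition ee (b i : nat) := \sum_(0 <= l < i) b ^ l.

Lemma W_cons L g f : W L.+1 g f = g 0 * f 0 + W L (fun i => g i.+1) (fun i => f i.+1).
Proof. by rewrite /W big_nat_recl. Qed.

Lemma W_0 g f : W 0 g f = 0.
Proof. by rewrite /W big_geq. Qed.

Lemma W_ext L g f1 f2 : (forall i, f1 i = f2 i) -> W L g f1 = W L g f2.
Proof. move=> H; apply: eq_bigr => i _; by rewrite H. Qed.

Lemma W_extg L g1 g2 f : (forall i, i < L -> g1 i = g2 i) -> W L g1 f = W L g2 f.
Proof. move=> H; apply: eq_big_nat => i /andP [_ Hi]; by rewrite H. Qed.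

Lemma W_D L g f1 f2 : W L g (fun i => f1 i + f2 i) = W L g f1 + W L g f2.
Proof. rewrite /W -big_split /=; apply: eq_bigr => i _; by rewrite mulnDr. Qed.

Lemma W_M L g k f : W L g (fun i => k * f i) = k * W L g f.
Proof. rewrite /W big_distrr /=; apply: eq_bigr => i _; by rewrite mulnCA. Qed.

Lemma W_recr L g f : W L.+1 g f = W L g f + g L * f L.
Proof. by rewrite /W big_nat_recr. Qed.

Lemma ee_S b i : ee b i.+1 = ee b i + b ^ i.
Proof. by rewrite /ee big_nat_recr. Qed.

Lemma ee_0 b : ee b 0 = 0.
Proof. by rewrite /ee big_geq. Qed.

Lemma ee_eq b i : 1 <= b -> (b - 1) * ee b i + 1 = b ^ i.
Proof.
move=> hb; elim: i => [|i IH]; first by rewrite ee_0 muln0.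
rewrite ee_S expnS mulnDr -addnAC IH.
have : b ^ i * b = (b - 1) * b ^ i + b ^ i by rewrite mulnBl mul1n subnK ?leq_pmull // mulnC.
rewrite mulnC; nia.
Qed.

Lemma ee_Sl b i : 1 <= b -> ee b i.+1 = b * ee b i + 1.
Proof.
move=> hb; rewrite ee_S -(ee_eq b i hb).
have : b * ee b i = (b - 1) * ee b i + ee b i by rewrite mulnBl mul1n subnK ?leq_pmull.
lia.
Qed.

Lemma ee_pos b i : 1 <= b -> 0 < ee b i.+1.
Proof. move=> hb; rewrite ee_Sl //; lia. Qed.

Lemma sgen_eq b n i : 1 <= b ->
  sgen b n i = sgen b n 0 * b ^ i + (b - 1) * ee b i.
Proof.
move=> hb; rewrite /sgen addn0 expnD.
have h1 := ee_eq b i hb.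
have h2 : 0 < b ^ i by rewrite expn_gt0; lia.
have h3 : 0 < b.+1 * b ^ n by rewrite muln_gt0 expn_gt0; lia.
set P := b.+1 * b ^ n. rewrite mulnA -/P.
rewrite mulnBl mul1n. 
have : b ^ i <= P * b ^ i by rewrite leq_pmull.
lia.
Qed.

Lemma W_sgen b n L g : 1 <= b ->
  W L g (sgen b n) = sgen b n 0 * W L g (fun i => b ^ i) + (b - 1) * W L g (ee b).
Proof.
move=> hb; rewrite -!W_M -W_D; apply: W_ext => i; exact: sgen_eq.
Qed.

Lemma W_pow b L g : 1 <= b ->
  W L g (fun i => b ^ i) = (b - 1) * W L g (ee b) + W L g (fun _ => 1).
Proof.
move=> hb; rewrite -!W_M -W_D; apply: W_ext => i; by rewrite ee_eq.
Qed.

Definition Ws (c : seq nat) f := W (size c) (nth 0 c) f.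
Definition addhead (q : nat) (c : seq nat) :=
  match c with [::] => [:: q] | a :: r => (a + q) :: r end.

Lemma Ws_cons a r f : Ws (a :: r) f = a * f 0 + Ws r (fun i => f i.+1).
Proof. by rewrite /Ws /= W_cons. Qed.

Lemma Ws_nil f : Ws [::] f = 0.
Proof. by rewrite /Ws W_0. Qed.

Lemma Ws_addhead q c f : Ws (addhead q c) f = q * f 0 + Ws c f.
Proof.
case: c => [|a r].
  by rewrite /= Ws_cons !Ws_nil.
by rewrite /= !Ws_cons mulnDl; lia.
Qed.

Lemma W_powS b L g : W L g (fun i => b ^ i.+1) = b * W L g (fun i => b ^ i).
Proof. rewrite -W_M; apply: W_ext => i; by rewrite expnS. Qed.

Lemma Ws_powS b c : Ws c (fun i => b ^ i.+1) = b * Ws c (fun i => b ^ i).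
Proof. exact: W_powS. Qed.

Lemma modb_aux b m k : (m + b * k) %% b = m %% b.
Proof. by rewrite addnC mulnC modnMDl. Qed.

Lemma digits_min b (hb : 1 <= b) K : forall d, (forall i, i < K -> d i < b) ->
  forall c, Ws c (fun i => b ^ i) = W K d (fun i => b ^ i) ->
  W K d (fun _ => 1) <= Ws c (fun _ => 1).
Proof.
elim: K => [|K IH] d Hd c Hc; first by rewrite W_0.
rewrite W_cons W_powS /= in Hc; rewrite W_cons.
have Hd' : forall i, i < K -> d i.+1 < b by move=> i Hi; apply: Hd.
case: c Hc => [|c0 c'] Hc.
  rewrite Ws_nil in Hc.
  have h0 : d 0 = 0 by lia.
  have h1 : W K (fun i => d i.+1) (fun i => b ^ i) = 0 by nia.
  have := IH _ Hd' [::]; rewrite Ws_nil h1 => /(_ erefl).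
  rewrite Ws_nil h0; lia.
rewrite Ws_cons Ws_powS /= in Hc; rewrite Ws_cons /=.
set Yc := Ws c' _ in Hc; set Yd := W K _ _ in Hc.
have Hq := divn_eq c0 b.
set q := c0 %/ b in Hq; set r := c0 %% b in Hq.
have hr : r = d 0.
  have := congr1 (modn^~ b) Hc; rewrite /= !muln1 !modb_aux.
  rewrite (modn_small (Hd 0 _)) //.
have hq : q + Yc = Yd.
  apply/eqP; rewrite -(eqn_pmul2l hb); apply/eqP.
  rewrite hr in Hq; rewrite mulnDr; nia.
have := IH _ Hd' (addhead q c'); rewrite !Ws_addhead /= muln1 hq => /(_ erefl).
have : q <= q * b by rewrite leq_pmulr.
lia.
Qed.

Definition validK (b K : nat) (g : nat -> nat) :=
  forall j, j < K -> g j <= b /\ (g j = b -> forall i, i < j -> g i = 0).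

Lemma validK_shift b K g : validK b K.+1 g -> validK b K (fun i => g i.+1).
Proof.
move=> H j Hj; have [h1 h2] := H j.+1 Hj; split=> // Hb i Hi; exact: h2.
Qed.

Lemma shift0 b (hb : 2 <= b) K g c : g 0 = 0 ->
  Ws c (fun i => b ^ i) + 1 = W K.+1 g (fun i => b ^ i) ->
  exists c2, Ws c2 (fun i => b ^ i) + 1 = W K (fun i => g i.+1) (fun i => b ^ i) /\
    Ws c2 (fun _ => 1) + (b - 1) <= Ws c (fun _ => 1).
Proof.
move=> g0 Hc; rewrite W_cons W_powS g0 /= in Hc.
set Yg := W K _ _ in Hc.
case: c Hc => [|c0 c'] Hc.
  rewrite Ws_nil in Hc; exfalso; move: Hc; case: Yg => [|y]; nia.
rewrite Ws_cons Ws_powS /= in Hc; set Yc := Ws c' _ in Hc.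
have Hq := divn_eq c0 b.
set q := c0 %/ b in Hq; set r := c0 %% b in Hq.
have hrb : r < b by rewrite /r ltn_pmod //; lia.
have hr : r = b - 1.
  have E : r.+1 + b * (q + Yc) = b * Yg by nia.
  have := congr1 (modn^~ b) E; rewrite /= modb_aux mulnC modnMl.
  case: (ltngtP r.+1 b) => h; [by rewrite modn_small //| lia | lia].
have hq : q + Yc + 1 = Yg.
  apply/eqP; rewrite -(@eqn_pmul2l b) ?(leq_trans _ hb) //; apply/eqP.
  rewrite hr in Hq; nia.
exists (addhead q c'); rewrite !Ws_addhead /=; split; first lia.
rewrite Ws_cons /=.
have : q <= q * b by rewrite leq_pmulr // (leq_trans _ hb).
lia.
Qed.

Lemma Dweak b (hb : 2 <= b) K : forall g, validK b K g ->
  forall c, Ws c (fun i => b ^ i) + 1 = W K g (fun i => b ^ i) ->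
  W K g (fun _ => 1) <= Ws c (fun _ => 1) + 1.
Proof.
elim: K => [|K IH] g Hg c Hc; first by rewrite W_0 in Hc; lia.
have [g0|g0] := posnP (g 0).
  have [c2 [h1 h2]] := @shift0 b hb _ g c g0 Hc.
  have := IH _ (@validK_shift _ _ _ Hg) _ h1.
  rewrite W_cons g0 /=; lia.
pose d := fun i => if i == 0 then g 0 - 1 else g i.
have Hd : forall i, i < K.+1 -> d i < b.
  move=> [|i] Hi /=; first by have [h _] := Hg 0 isT; move: h; rewrite /d /=; lia.
  idtac.
  have [h1 h2] := Hg i.+1 Hi.
  have : g i.+1 != b by apply/eqP => /h2 /(_ 0 isT); lia.
  rewrite /d /=; lia.
have E : Ws c (fun i => b ^ i) = W K.+1 d (fun i => b ^ i).
  move: Hc; rewrite !W_cons /d /=; lia.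
have := @digits_min b (ltnW hb) _ d Hd c E.
rewrite !W_cons /d /=; lia.
Qed.

Lemma Dstrong b (hb : 2 <= b) K g c : validK b K.+1 g -> g 0 = 0 ->
  Ws c (fun i => b ^ i) + 1 = W K.+1 g (fun i => b ^ i) ->
  W K.+1 g (fun _ => 1) + (b - 2) <= Ws c (fun _ => 1).
Proof.
move=> Hg g0 Hc.
have [c2 [h1 h2]] := @shift0 b hb _ g c g0 Hc.
have := @Dweak b hb _ _ (@validK_shift _ _ _ Hg) _ h1.
rewrite W_cons g0 /=; lia.
Qed.

Lemma M_eq b n : 1 <= b -> sgen b n 0 = (b - 1) * (ee b n.+1 + ee b n) + 1.
Proof.
move=> hb; rewrite /sgen addn0 mulnDr.
have h1 := ee_eq b n.+1 hb; have h2 := ee_eq b n hb.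
rewrite expnS in h1.
have h3 : 0 < b ^ n by rewrite expn_gt0; lia.
rewrite mulSn; lia.
Qed.

Lemma coprime_M b n : 1 <= b -> coprime (sgen b n 0) (b - 1).
Proof.
move=> hb; rewrite coprime_sym /coprime M_eq // mulnC gcdnMDl gcdn1 //.
Qed.

Lemma zero_W L g f : (forall i, i < L -> g i = 0) -> W L g f = 0.
Proof.
elim: L => [|L IH] H; first by rewrite W_0.
rewrite W_recr H // mul0n addn0 IH // => i hi; apply: H; lia.
Qed.

Lemma W_le L g B : (forall i, i < L -> g i <= B) -> W L g (fun _ => 1) <= L * B.
Proof.
elim: L => [|L IH] H; first by rewrite W_0.
have h := IH (fun i hi => H i ltac:(lia)).
have := H L (ltnSn L).
rewrite W_recr mulSn muln1; lia.
Qed.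

Lemma Pref b (hb : 1 <= b) m : forall g, g 0 = 0 ->
  (forall j, 1 <= j <= m -> g j <= b) ->
  (forall j, 1 <= j <= m -> g j = b -> forall i, 1 <= i < j -> g i = 0) ->
  W m.+1 g (ee b) < ee b m.+1.
Proof.
elim: m => [|m IH] g g0 H1 H2.
  by rewrite W_cons W_0 g0 ee_Sl // ee_0 !muln0.
rewrite W_recr (ee_Sl b m.+1 hb).
have [hm|hm] := eqVneq (g m.+1) b.
  have hz : W m.+1 g (ee b) = 0.
    by apply: zero_W => -[|i] hi //; apply: (H2 m.+1 _ hm); lia.
  rewrite hz hm; lia.
have hle : g m.+1 <= b - 1 by have := H1 m.+1; lia.
have := IH g g0 (fun j hj => H1 j ltac:(lia)) (fun j hj => H2 j ltac:(lia)).
have : g m.+1 * ee b m.+1 <= (b - 1) * ee b m.+1 by rewrite leq_mul2r hle orbT.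
have : b * ee b m.+1 = (b - 1) * ee b m.+1 + ee b m.+1.
  by rewrite mulnBl mul1n subnK // leq_pmull.
lia.
Qed.

Lemma E_bound b n (hb : 2 <= b) (hn : 1 <= n) g : inR b n g -> g 0 = 0 ->
  W n.+2 g (ee b) < sgen b n 0.
Proof.
move=> [Hi [Htop [Hb Hiii]]] g0.
have hb1 : 1 <= b by lia.
rewrite M_eq // mulnDr.
case: n hn Hi Htop Hb Hiii => [//|m] _ Hi Htop Hb Hiii.
rewrite W_recr.
have [hlt|heq] : g m.+2 < b - 1 \/ g m.+2 = b - 1 by lia.
  have := @Pref b hb1 m.+1 g g0 (fun j hj => Hi j ltac:(lia)) (fun j hj => Hb j ltac:(lia)).
  move=> h.
  have : g m.+2 * ee b m.+2 <= (b - 2) * ee b m.+2 by rewrite leq_mul2r; apply/orP; right; lia.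
  have : (b - 1) * ee b m.+2 = (b - 2) * ee b m.+2 + ee b m.+2.
    nia.
  nia.
have [h1 h2] := Hiii heq.
rewrite W_recr.
have [hlt2|heq2] : g m.+1 < b - 1 \/ g m.+1 = b - 1 by lia.
  have := @Pref b hb1 m g g0 (fun j hj => Hi j ltac:(lia)) (fun j hj => Hb j ltac:(lia)).
  have : g m.+1 * ee b m.+1 <= (b - 2) * ee b m.+1 by rewrite leq_mul2r; apply/orP; right; lia.
  have : (b - 1) * ee b m.+1 = (b - 2) * ee b m.+1 + ee b m.+1.
    nia.
  rewrite heq; lia.
have hz : W m.+1 g (ee b) = 0.
  by apply: zero_W => -[|i] hi //; apply: (h2 heq2); lia.
rewrite hz heq heq2; lia.
Qed.

Lemma inT_Ws b n x : inT b n x <-> exists c, x = Ws c (sgen b n).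
Proof. by rewrite /inT /Ws /W; split=> -[c Hc]; exists c; rewrite Hc big_mkord. Qed.

Lemma W_inT b n L g : inT b n (W L g (sgen b n)).
Proof.
apply/inT_Ws; exists (mkseq g L); rewrite /Ws size_mkseq.
apply: W_extg => i hi; by rewrite nth_mkseq.
Qed.

Lemma inT_addM b n x k : inT b n x -> inT b n (x + k * sgen b n 0).
Proof.
move=> /inT_Ws [c ->]; apply/inT_Ws; exists (addhead k c).
by rewrite Ws_addhead addnC.
Qed.

Lemma inR_valid b n (hb : 2 <= b) g : inR b n g -> g 0 = 0 -> validK b n.+2 g.
Proof.
move=> [Hi [Htop [Hb Hiii]]] g0 [|j] hj.
  rewrite g0; split=> // h; lia.
split; first by apply: Hi; lia.
move=> hjb [|i] hi //; apply: (Hb j.+1) => //; lia.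
Qed.

Lemma NM_bound b n (hb : 2 <= b) (hn : 1 <= n) :
  n.+2 * b <= (b - 1) * (sgen b n 0 + 1).
Proof.
have hP : n < b ^ n by apply: ltn_expl.
have h0 : sgen b n 0 + 1 = b.+1 * b ^ n.
  rewrite /sgen addn0 subnK // muln_gt0 expn_gt0; lia.
rewrite h0 mulnA.
have h1 : (b - 1) * b.+1 * n.+1 <= (b - 1) * b.+1 * b ^ n by rewrite leq_mul2l hP orbT.
have h2 : n.+2 * b <= (b - 1) * b.+1 * n.+1 by nia.
lia.
Qed.

Lemma back b n (hb : 2 <= b) (hn : 1 <= n) g : inR b n g -> g 0 = 0 ->
  inApery (inT b n) (sgen b n 0) (W n.+2 g (sgen b n)).
Proof.
move=> HR g0; split; first exact: W_inT.
move=> [hMw /inT_Ws [c Hc]].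
have hb1 : 1 <= b by lia.
have hEM := @E_bound b n hb hn g HR g0.
have hv := @inR_valid b n hb g HR g0.
have hN : W n.+2 g (fun _ => 1) <= n.+2 * b.
  apply: W_le => i hi; by have [] := hv i hi.
have hNM := @NM_bound b n hb hn.
have hY := W_pow b n.+2 g hb1.
have hY' := W_pow b (size c) (nth 0 c) hb1.
rewrite /Ws in Hc; rewrite !W_sgen // in Hc hMw.
have hM0 : 0 < sgen b n 0 by rewrite M_eq // addn1.
move: Hc hMw hEM hN hNM hY hY' hM0.
rewrite -/(Ws c (fun i => b ^ i)) -/(Ws c (ee b)) -/(Ws c (fun _ => 1)).
set M := sgen b n 0.
set Y := W n.+2 g _; set E := W n.+2 g (ee b); set N := W n.+2 g (fun _ => 1).
set Y' := Ws c _; set E' := Ws c (ee b); set N' := Ws c (fun _ => 1).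
move=> Hc hMw hEM hN hNM hY hY' hM0.
have heq : (b - 1) * E + M * Y = (b - 1) * E' + M * (Y' + 1) by lia.
have hmod : (b - 1) * E = (b - 1) * E' %[mod M].
  by have := congr1 (modn^~ M) heq; rewrite /= !modb_aux.
have hcop := coprime_M b n hb1.
have [hlt|hge] := ltnP E' E.
  have : M %| E - E'.
    rewrite -(Gauss_dvdr _ hcop) mulnBr -eqn_mod_dvd; last by rewrite leq_mul2l (ltnW hlt) orbT.
    by apply/eqP.
  move=> /dvdn_leq; rewrite subn_gt0 => /(_ hlt); lia.
have : M %| E' - E.
  rewrite -(Gauss_dvdr _ hcop) mulnBr -eqn_mod_dvd; last by rewrite leq_mul2l hge orbT.
  by apply/eqP.
move=> /dvdnP [k hk].
have hE' : E' = E + k * M by lia.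
have hYY : Y = Y' + 1 + (b - 1) * k.
  apply/eqP; rewrite -(eqn_pmul2l hM0); apply/eqP.
  move: heq; rewrite hE' mulnDr; nia.
have [k0|kpos] := posnP k.
  rewrite k0 muln0 addn0 in hYY.
  have hYc : Ws c (fun i => b ^ i) + 1 = W n.+2 g (fun i => b ^ i) by rewrite -/Y' -/Y hYY.
  have := @Dstrong b hb _ g c hv g0 hYc.
  rewrite -/N -/N'.
  rewrite k0 mul0n addn0 in hE'.
  rewrite hE' in hY'; lia.
have h1 : (b - 1) * (M + 1) <= (b - 1) * k * (M + 1).
  rewrite -mulnA leq_mul2l; apply/orP; right; rewrite -{1}(mul1n (M + 1)) leq_mul2r; lia.
have h2 : N = (b - 1) * k * (M + 1) + N' + 1.
  rewrite hE' in hY'; nia.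
lia.
Qed.

Lemma greedy b (hb : 1 <= b) m : forall X, X < ee b m.+1 ->
  exists g, g 0 = 0 /\ (forall j, 1 <= j <= m -> g j <= b) /\
   (forall j, 1 <= j <= m -> g j = b -> forall i, 1 <= i < j -> g i = 0) /\
   X = W m.+1 g (ee b).
Proof.
elim: m => [|m IH] X hX.
  rewrite ee_Sl // ee_0 muln0 in hX.
  exists (fun _ => 0); split=> //; split; first by move=> j; lia.
  split; first by move=> j; lia.
  rewrite zero_W //; lia.
have he : 0 < ee b m.+1 by apply: ee_pos.
rewrite (ee_Sl b m.+1 hb) in hX.
have [hXe|hXe] : X = b * ee b m.+1 \/ X < b * ee b m.+1 by lia.
  exists (fun j => if j == m.+1 then b else 0); split=> //; split.
    by move=> j _; case: eqP.
  split.
    move=> j hj; case: eqP => [->|_] hjb i hi; last by lia.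
    case: eqP => //; lia.
  rewrite W_recr eqxx zero_W ?add0n // => i hi.
  case: eqP => //; lia.
set q := X %/ ee b m.+1; set r := X %% ee b m.+1.
have hq : q < b by rewrite /q ltn_divLR // mulnC.
have hr : r < ee b m.+1 by rewrite /r ltn_pmod.
have [g' [g0 [H1 [H2 H3]]]] := IH r hr.
exists (fun j => if j == m.+1 then q else g' j); split=> //; split.
  move=> j hj; case: eqP => [_|hne]; first lia.
  apply: H1; lia.
split.
  move=> j hj; case: eqP => [_|hne] hjb; first lia.
  move=> i hi; case: eqP => [|_]; first lia.
  apply: (H2 j) => //; lia.
rewrite W_recr eqxx.
rewrite (@W_extg _ _ g'); last by move=> i hi; case: eqP => //; lia.
rewrite -H3 (divn_eq X (ee b m.+1)) -/q -/r; lia.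
Qed.

Lemma buildR b n (hb : 2 <= b) (hn : 1 <= n) X : X < sgen b n 0 ->
  exists g, inR b n g /\ g 0 = 0 /\ W n.+2 g (ee b) = X.
Proof.
have hb1 : 1 <= b by lia.
rewrite M_eq // mulnDr.
case: n hn => [//|m] _ hX.
have he2 : 0 < ee b m.+2 by apply: ee_pos.
have he1 : 0 < ee b m.+1 by apply: ee_pos.
have [hA|[hB|hC]] : X < (b - 1) * ee b m.+2 \/
   ((b - 1) * ee b m.+2 <= X < (b - 1) * ee b m.+2 + (b - 1) * ee b m.+1) \/
   X = (b - 1) * ee b m.+2 + (b - 1) * ee b m.+1 by lia.
- set q := X %/ ee b m.+2; set r := X %% ee b m.+2.
  have hq : q < b - 1 by rewrite /q ltn_divLR // mulnC.
  have hr : r < ee b m.+2 by rewrite /r ltn_pmod.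
  have [g' [g0 [H1 [H2 H3]]]] := @greedy b hb1 m.+1 r hr.
  exists (fun j => if j == m.+2 then q else g' j); split; last split => //.
    split.
      move=> j hj; case: eqP => [_|hne]; first lia.
      apply: H1; lia.
    split; first by rewrite eqxx; lia.
    split.
      move=> j hj; case: eqP => [_|hne] hjb; first lia.
      move=> i hi; case: eqP => [|_]; first lia.
      apply: (H2 j) => //; lia.
    rewrite eqxx => h; lia.
  rewrite W_recr eqxx.
  rewrite (@W_extg _ _ g'); last by move=> i hi; case: eqP => //; lia.
  rewrite -H3 (divn_eq X (ee b m.+2)) -/q -/r; lia.
- set X' := X - (b - 1) * ee b m.+2.
  set q := X' %/ ee b m.+1; set r := X' %% ee b m.+1.
  have hq : q < b - 1 by rewrite /q ltn_divLR // mulnC; lia.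
  have hr : r < ee b m.+1 by rewrite /r ltn_pmod.
  have [g' [g0 [H1 [H2 H3]]]] := @greedy b hb1 m r hr.
  exists (fun j => if j == m.+2 then b - 1 else if j == m.+1 then q else g' j).
  split; last split => //.
    split.
      move=> j hj; case: eqP => [_|hne]; first lia.
      case: eqP => [_|hne1]; first lia.
      apply: H1; lia.
    split; first by rewrite eqxx.
    split.
      move=> j hj; case: eqP => [_|hne] hjb; first lia.
      case: eqP hjb => [_|hne1] hjb; first lia.
      move=> i hi; case: eqP => [|_]; first lia.
      case: eqP => [|_]; first lia.
      apply: (H2 j) => //; lia.
    rewrite eqxx => _; have -> : (m.+1 == m.+2) = false by lia.
    rewrite eqxx; split; first lia.
    lia.
  rewrite (W_recr m.+2) (W_recr m.+1) eqxx.
  have -> : (m.+1 == m.+2) = false by lia.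
  rewrite eqxx.
  rewrite (@W_extg _ _ g'); last by move=> i hi; do 2 (case: eqP => //; try lia).
  rewrite -H3.
  have := divn_eq X' (ee b m.+1); rewrite -/q -/r => h.
  rewrite /X' in h; lia.
- exists (fun j => if j == m.+2 then b - 1 else if j == m.+1 then b - 1 else 0).
  split; last split => //.
    split.
      move=> j hj; case: eqP => [_|hne]; first lia.
      case: eqP => [_|hne1]; lia.
    split; first by rewrite eqxx.
    split.
      move=> j hj; case: eqP => [_|hne] hjb; first lia.
      case: eqP hjb => [_|hne1] hjb; lia.
    rewrite eqxx => _; have -> : (m.+1 == m.+2) = false by lia.
    rewrite eqxx; split; first lia.
    move=> _ i hi; case: eqP => [|_]; first lia.
    case: eqP => [|_] //; lia.
  rewrite (W_recr m.+2) (W_recr m.+1) eqxx.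
  have -> : (m.+1 == m.+2) = false by lia.
  rewrite eqxx zero_W; first by lia.
  move=> i hi; do 2 (case: eqP => //; try lia).
Qed.

Lemma ap_lt b n x w : 0 < sgen b n 0 ->
  inApery (inT b n) (sgen b n 0) w -> inT b n x -> x < w ->
  x = w %[mod sgen b n 0] -> False.
Proof.
move=> hM [_ Hw] hx hlt hmod.
have : sgen b n 0 %| w - x.
  rewrite -eqn_mod_dvd ?(ltnW hlt) //; by apply/eqP.
move=> /dvdnP [k hk].
have kpos : 0 < k by move: hk; case: k => //=; lia.
apply: Hw; split; first nia.
have -> : w - sgen b n 0 = x + k.-1 * sgen b n 0.
  have : k = k.-1.+1 by lia.
  move=> hk1; rewrite hk1 mulSn in hk.
  move: (k.-1 * sgen b n 0) hk => P hk; lia.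
exact: (@inT_addM b n x k.-1 hx).
Qed.

Lemma ap_unique b n x w : 0 < sgen b n 0 ->
  inApery (inT b n) (sgen b n 0) x -> inApery (inT b n) (sgen b n 0) w ->
  x = w %[mod sgen b n 0] -> x = w.
Proof.
move=> hM hx hw hmod.
case: (ltngtP x w) => // h.
- by case: (@ap_lt b n x w hM hw hx.1 h hmod).
- by case: (@ap_lt b n w x hM hx hw.1 h (esym hmod)).
Qed.

Lemma fwd b n (hb : 2 <= b) (hn : 1 <= n) x :
  inApery (inT b n) (sgen b n 0) x ->
  exists g, inR b n g /\ g 0 = 0 /\ x = W n.+2 g (sgen b n).
Proof.
move=> hx.
have hb1 : 1 <= b by lia.
have hM : 0 < sgen b n 0 by rewrite M_eq // addn1.
have [c hc] := (inT_Ws b n x).1 hx.1.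
have hX : Ws c (ee b) %% sgen b n 0 < sgen b n 0 by rewrite ltn_pmod.
have [g [HR [g0 HE]]] := @buildR b n hb hn _ hX.
exists g; split=> //; split=> //.
have hw := @back b n hb hn g HR g0.
apply: (@ap_unique b n x _ hM hx hw).
rewrite hc /Ws !W_sgen // HE.
rewrite -/(Ws c (ee b)).
by rewrite mulnC modnMDl [in RHS]mulnC modnMDl modnMmr.
Qed.

Lemma inR_ext b n (hn : 1 <= n) t t' : (forall j, 0 < j -> t' j = t j) ->
  inR b n t -> inR b n t'.
Proof.
move=> He [Hi [Htop [Hb Hiii]]].
have hn1 : 0 < n.+1 by [].
split; first by move=> j hj; rewrite He; [apply: Hi|lia].
split; first by rewrite He.
split.
  move=> j hj; rewrite He; last lia.
  move=> hjb i hi; rewrite He; last lia.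
  exact: (Hb j).
rewrite He // He //; move=> h; have [h1 h2] := Hiii h; split=> // h3 i hi.
rewrite He; last lia.
exact: h2.
Qed.

Lemma sum_shift b n g : g 0 = 0 ->
  W n.+2 g (sgen b n) = \sum_(1 <= j < n.+2) g j * sgen b n j.
Proof. by move=> g0; rewrite /W big_ltn // g0 mul0n add0n. Qed.

Theorem mainTheorem3 (b n : nat) (hb : 2 <= b) (hn : 1 <= n) (x : nat) :
  inApery (inT b n) (sgen b n 0) x <->
  exists t : nat -> nat,
    inR b n t /\ x = \sum_(1 <= j < n.+2) t j * sgen b n j.
Proof.
split.
  move=> /(@fwd b n hb hn x) [g [HR [g0 ->]]].
  by exists g; split=> //; rewrite sum_shift.
move=> [t [HR ->]].
pose g := fun j => if j == 0 then 0 else t j.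
have HR' : inR b n g by apply: (@inR_ext b n hn t g _ HR) => -[|j].
have -> : \sum_(1 <= j < n.+2) t j * sgen b n j = W n.+2 g (sgen b n).
  rewrite sum_shift //; apply: eq_big_nat => i /andP [hi _].
  by rewrite /g; case: i hi.
exact: (@back b n hb hn g HR').
Qed.
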